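(* Let $S$ be a finite simple semigroup satisfying the quasi-identities $$\forall a\,\forall b\,\forall \alpha\,\forall\beta\ \big((a\alpha=a\beta)\to(b\alpha=b\beta)\big),\qquad \forall a\,\forall b\,\forall \alpha\,\forall\beta\ \big((\alpha a=\beta a)\to(\alpha b=\beta b)\big).$$ Then $S$ is a rectangular band of groups.
   Context: A semigroup is simple if its only two-sided ideal is itself. By the Sushkevich–Rees theorem, every finite simple semigroup is isomorphic to some $(G,P,\Lambda,I)$: the set of triples $(\lambda,g,i)$ with $g$ in a finite group $G$, $\lambda\in\Lambda$, $i\in I$ ($\Lambda,I$ finite), with multiplication $(\lambda,g,i)(\mu,h,j)=(\lambda,g\,p_{i\mu}h,j)$, where $P=(p_{i\mu})$ is an $|I|\times|\Lambda|$ matrix over $G$ whose first row and first column consist of $1$. A semigroup is a rectangular band of groups if it is isomorphic to such a $(G,P,\Lambda,I)$ with $p_{i\lambda}=1$ for all $i\in I,\lambda\in\Lambda$. *)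

(* Defs.v *)
From mathcomp Require Import all_boot all_fingroup.
Set Implicit Arguments. Unset Strict Implicit. Unset Printing Implicit Defensive.

Local Open Scope group_scope.

Definition is_ideal (T : finType) (mul : T -> T -> T) (A : {set T}) : Prop :=
  A != set0 /\ (forall x y : T, y \in A -> (mul x y \in A) /\ (mul y x \in A)).

Definition simple_semigroup (T : finType) (mul : T -> T -> T) : Prop :=
  forall A : {set T}, is_ideal mul A -> A = [set: T].

(* Rees matrix semigroup (G, P, Λ, I): triples (λ, g, i) with
   (λ,g,i)(μ,h,j) = (λ, g p_{iμ} h, j). *)
Definition rees_mul (G : finGroupType) (Lam I : finType) (P : I -> Lam -> G)
  (x y : Lam * G * I) : Lam * G * I :=
  let: (l, g, i) := x in let: (m, h, j) := y in (l, g * P i m * h, j).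

Definition rectangular_band_of_groups (T : finType) (mul : T -> T -> T) : Prop :=
  exists (G : finGroupType) (Lam I : finType) (f : T -> Lam * G * I),
    bijective f /\
    forall x y : T, f (mul x y) = rees_mul (fun (_ : I) (_ : Lam) => (1 : G)) (f x) (f y).

(* Main.v *)
Require Import Defs.
From mathcomp Require Import all_boot all_fingroup.
From mathcomp Require Import zify.
Set Implicit Arguments. Unset Strict Implicit. Unset Printing Implicit Defensive.

Lemma collide (T : finType) (pw : nat -> T) : exists i p, 0 < p /\ pw i = pw (i + p).
Proof.
  pose f (k : 'I_#|T|.+1) := pw k.
  have : ~~ injectiveb f.
    by apply/negP => /injectiveP/leq_card; rewrite card_ord ltnn.
  case/injectivePn => a [b nab fab].
  case: (ltngtP a b) => hab.
  - exists a, (b - a); split; first lia.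
    rewrite subnKC; last exact: ltnW. exact: fab.
  - exists b, (a - b); split; first lia.
    rewrite subnKC; last exact: ltnW. exact: esym fab.
  - by rewrite (val_inj hab) eqxx in nab.
Qed.

Lemma idem_gen (T : finType) (mul : T -> T -> T) (pw : nat -> T)
  (pwD : forall m n, pw (m + n).+1 = mul (pw m) (pw n)) : exists e, mul e e = e.
Proof.
have [i [p [p0 hip]]] := collide pw.
have per m : i < m -> pw (m + p) = pw m.
  move=> im.
  have e1 : m + p = (i + p + (m - i.+1)).+1 by lia.
  have e2 : m = (i + (m - i.+1)).+1 by lia.
  by rewrite e1 pwD -hip -pwD -e2.
have perq q m : i < m -> pw (m + q * p) = pw m.
  elim: q => [|q IH] im; first by rewrite mul0n addn0.
  have -> : m + q.+1 * p = (m + q * p) + p by rewrite mulSn; lia.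
  by rewrite per ?IH //; lia.
have hN : i.+2 <= p * i.+2 := leq_pmull _ p0.
exists (pw (p * i.+2).-1).
rewrite -pwD.
have -> : ((p * i.+2).-1 + (p * i.+2).-1).+1 = (p * i.+2).-1 + i.+2 * p.
  rewrite [i.+2 * p]mulnC. move: hN; move: (p * i.+2) => N hN. lia.
rewrite perq //. move: hN; move: (p * i.+2) => N hN. lia.
Qed.

Lemma idem_exists (T : finType) (mul : T -> T -> T) (mulA : associative mul) (x : T) :
  exists e, mul e e = e.
Proof.
apply: (idem_gen (pw := fun n => iter n (mul x) x)) => m n.
elim: m => [|m IH]; first by rewrite add0n.
by rewrite addSn iterS IH mulA.
Qed.


Section S.
Variables (T : finType) (mul : T -> T -> T).
Hypothesis mulA : associative mul.
Hypothesis Hleft : forall a b alpha beta : T,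
      mul a alpha = mul a beta -> mul b alpha = mul b beta.
Hypothesis Hright : forall a b alpha beta : T,
      mul alpha a = mul beta a -> mul alpha b = mul beta b.
Variable e : T.
Hypothesis ee : mul e e = e.

Lemma lE b y : mul b (mul e y) = mul b y.
Proof. apply: (@Hleft e b (mul e y) y). by rewrite mulA ee. Qed.

Lemma rE b y : mul (mul y e) b = mul y b.
Proof. apply: (@Hright e b (mul y e) y). by rewrite -mulA ee. Qed.

Definition psi_fun (x z : T) : T := if mul z e == z then mul (mul z x) e else z.

Lemma psi_fun_in x z : mul (mul (mul z x) e) e == mul (mul z x) e.
Proof. by rewrite -mulA ee. Qed.

Lemma psi_inj x : injective (psi_fun x).
Proof.
move=> z z'; rewrite /psi_fun.
case: eqP => hz; case: eqP => hz' h.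
- rewrite -hz -hz'; apply: (@Hright (mul x e) e z z'); rewrite !mulA; exact h.
- by case: hz'; rewrite -h -mulA ee.
- by case: hz; rewrite h -mulA ee.
- exact h.
Qed.

Definition psi x : {perm T} := perm (@psi_inj x).

Lemma psiE x z : psi x z = psi_fun x z.
Proof. by rewrite permE. Qed.

Lemma psiM x y : psi (mul x y) = (psi x * psi y)%g.
Proof.
apply/permP => z; rewrite permM !psiE /psi_fun.
case: (eqVneq (mul z e) z) => hz.
  by rewrite psi_fun_in (rE y (mul z x)) mulA.
by rewrite (negbTE hz).
Qed.

Lemma psi1 : psi e = 1%g.
Proof.
apply/permP => z; rewrite psiE perm1 /psi_fun; case: eqP => // hz.
by rewrite -mulA ee hz.
Qed.

Definition Hset : {set {perm T}} := [set psi x | x : T].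

Lemma psi_in x : psi x \in Hset.
Proof. by apply/imsetP; exists x. Qed.

Lemma Hset_group : group_set Hset.
Proof.
apply/group_setP; split; first by rewrite -psi1 psi_in.
move=> _ _ /imsetP[x _ ->] /imsetP[y _ ->]. by rewrite -psiM psi_in.
Qed.

Definition Hgrp : {group {perm T}} := Group Hset_group.

Lemma right_inv y : exists d, forall x b, mul (mul (mul x y) d) b = mul x b.
Proof.
have : ((psi y)^-1)%g \in Hgrp by rewrite groupV psi_in.
case/imsetP => d _ hd. exists d => x b.
have h1 : psi (mul y d) = 1%g by rewrite psiM -hd mulgV.
have h2 : mul (mul e (mul y d)) e = e.
  by move: (congr1 (fun s : {perm T} => s e) h1); rewrite /= psiE perm1 /psi_fun ee eqxx.
apply: (@Hright e b (mul (mul x y) d) x).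
rewrite -(lE x y) -!mulA.
rewrite -!mulA in h2. by rewrite h2.
Qed.

Hypothesis Hsimple : simple_semigroup mul.

Lemma sandwich x : exists u v, x = mul (mul u x) v.
Proof.
pose A := [set z | [exists u, exists v, z == mul (mul u x) v]].
have hA : is_ideal mul A.
  split.
  - apply/set0Pn; exists (mul (mul x x) x); rewrite inE; apply/existsP; exists x; apply/existsP; exists x; done.
  - move=> z y; rewrite !inE => /existsP[u /existsP[v /eqP ->]]; split; apply/existsP.
    + exists (mul z u); apply/existsP; exists v; by rewrite !mulA eqxx.
    + exists u; apply/existsP; exists (mul v z); by rewrite !mulA eqxx.
have : x \in A by rewrite (Hsimple hA) inE.
by rewrite inE => /existsP[u /existsP[v /eqP hx]]; exists u, v.
Qed.

Lemma right_unit x : exists s, mul x s = x.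
Proof.
have [u [v hx]] := sandwich x.
have [d hd] := right_inv v.
exists (mul d v).
by move: (hd (mul u x) v); rewrite -hx mulA.
Qed.

Lemma Pw x y : exists w, mul (mul x y) w = x.
Proof.
have [s hs] := right_unit x. have [d hd] := right_inv y.
exists (mul d s). by rewrite mulA hd hs.
Qed.

Definition Rset x := [set mul (mul x e) s | s : T].

Lemma R1 x y : Rset (mul x y) = Rset x.
Proof.
apply/setP => z; apply/imsetP/imsetP => [[s _ ->]|[s _ ->]].
  exists (mul (mul y e) s) => //. by rewrite !mulA (rE y x).
have [d hd] := right_inv (mul y e).
exists (mul d (mul e s)) => //.
by rewrite -mulA -(hd x (mul e s)) !mulA.
Qed.

Lemma Rcancel x y : Rset x = Rset y -> mul (mul e x) e = mul (mul e y) e ->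
  mul x e = mul y e.
Proof.
move=> hR hexe.
have : mul x e \in Rset y.
  by rewrite -hR; apply/imsetP; exists e => //; rewrite -mulA ee.
case/imsetP => s _ hs.
rewrite hs -mulA.
apply: (@Hleft (mul e y) y (mul e s) e).
rewrite -hexe.
by rewrite -[RHS]mulA hs !mulA.
Qed.

Definition Lset x := [set mul s (mul e x) | s : T].

Hypothesis Pl : forall x y, exists w, mul w (mul y x) = x.
Hypothesis L1 : forall x y, Lset (mul x y) = Lset y.
Hypothesis Lcancel : forall x y, Lset x = Lset y ->
  mul e (mul x e) = mul e (mul y e) -> mul e x = mul e y.

Lemma cancel_both x y : mul x e = mul y e -> mul e x = mul e y -> x = y.
Proof.
move=> hr hl.
have hb b : mul x b = mul y b := @Hright e b x y hr.
have ha a : mul a x = mul a y := @Hleft e a x y hl.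
have [w hw] := Pw x y.
have [w' hw'] := Pl y x.
have hx : x = mul (mul y y) w by rewrite -mulA -hb mulA hw.
have hy : y = mul (mul w' y) y by rewrite -(ha w') -mulA hw'.
transitivity (mul (mul w' y) x).
  by rewrite {2}hx !mulA -hy -hx.
by rewrite ha -hy.
Qed.

Definition RS := [set Rset x | x : T].
Definition LS := [set Lset x | x : T].
Definition Lam := {A : {set T} | A \in RS}.
Definition Ity := {A : {set T} | A \in LS}.

Lemma RS_mem x : Rset x \in RS. Proof. by apply/imsetP; exists x. Qed.
Lemma LS_mem x : Lset x \in LS. Proof. by apply/imsetP; exists x. Qed.

Definition fmap (x : T) : Lam * (subg_of Hgrp) * Ity :=
  (exist _ (Rset x) (RS_mem x), subg Hgrp (psi x), exist _ (Lset x) (LS_mem x)).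

Definition pk (P : pred T) : T := odflt e [pick z | P z].
Lemma pkP (P : pred T) : (exists z, P z) -> P (pk P).
Proof.
rewrite /pk; case: pickP => [z hz _ //|hn [z hz]].
by rewrite hn in hz.
Qed.

Definition gmap (t : Lam * (subg_of Hgrp) * Ity) : T :=
  let: (l, h, i) := t in
  let a := pk (fun z => Rset z == val l) in
  let c := pk (fun z => psi z == sgval h) in
  let b := pk (fun z => Lset z == val i) in
  let d := pk (fun z => psi z == ((psi a)^-1)%g) in
  let d' := pk (fun z => psi z == ((psi b)^-1)%g) in
  mul (mul (mul (mul a d) c) d') b.

Lemma inv_ex a : exists z, psi z == ((psi a)^-1)%g.
Proof.
have : ((psi a)^-1)%g \in Hgrp by rewrite groupV psi_in.
by case/imsetP => z _ ->; exists z.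
Qed.

Lemma fg t : fmap (gmap t) = t.
Proof.
case: t => [[l h] i].
rewrite /gmap.
have ha : Rset (pk (fun z => Rset z == val l)) == val l.
  apply: (@pkP (fun z => Rset z == val l)); case: l => A /= /imsetP[z _ ->]; by exists z.
have hc : psi (pk (fun z => psi z == sgval h)) == sgval h.
  apply: (@pkP (fun z => psi z == sgval h)); move: (subgP h) => /imsetP[z _ ->]; by exists z.
have hb : Lset (pk (fun z => Lset z == val i)) == val i.
  apply: (@pkP (fun z => Lset z == val i)); case: i => A /= /imsetP[z _ ->]; by exists z.
set a := pk (fun z => Rset z == val l).
set c := pk (fun z => psi z == sgval h).
set b := pk (fun z => Lset z == val i).
have hd : psi (pk (fun z => psi z == ((psi a)^-1)%g)) == ((psi a)^-1)%g.
  by apply: (@pkP (fun z => psi z == ((psi a)^-1)%g)); apply: inv_ex.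
have hd' : psi (pk (fun z => psi z == ((psi b)^-1)%g)) == ((psi b)^-1)%g.
  by apply: (@pkP (fun z => psi z == ((psi b)^-1)%g)); apply: inv_ex.
set d := pk (fun z => psi z == ((psi a)^-1)%g).
set d' := pk (fun z => psi z == ((psi b)^-1)%g).
rewrite /fmap; congr (_, _, _); apply: val_inj => /=.
- by rewrite !R1 (eqP ha).
- rewrite subgK ?psi_in // !psiM (eqP hd) (eqP hd') (eqP hc).
  by rewrite mulgV mul1g -mulgA mulVg mulg1.
- by rewrite L1 (eqP hb).
Qed.

Lemma finj : injective fmap.
Proof.
move=> x y hf.
have hR : Rset x = Rset y := congr1 (fun t => val t.1.1) hf.
have hL : Lset x = Lset y := congr1 (fun t => val t.2) hf.
have hP : psi x = psi y.
  by move: (congr1 (fun t => sgval t.1.2) hf); rewrite /= !subgK ?psi_in.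
have hexe : mul (mul e x) e = mul (mul e y) e.
  by move: (congr1 (fun s : {perm T} => s e) hP); rewrite /= !psiE /psi_fun ee eqxx.
apply: cancel_both; first exact: Rcancel hR hexe.

have hh : mul e (mul x e) = mul e (mul y e) by rewrite !mulA.
exact (Lcancel hL hh).
Qed.

Lemma main_ne : rectangular_band_of_groups mul.
Proof.
exists (subg_of Hgrp), Lam, Ity, fmap; split.
  exists gmap; first by move=> x; apply: finj; rewrite fg.
  exact: fg.
move=> x y; rewrite /rees_mul /fmap /=.
congr (_, _, _).
- apply: val_inj; exact: R1.
- by rewrite mulg1 psiM subgM ?psi_in.
- apply: val_inj; exact: L1.
Qed.
End S.

Unset Implicit Arguments.

Theorem lemma2 (T : finType) (mul : T -> T -> T)
  (mulA : associative mul)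
  (Hsimple : simple_semigroup mul)
  (Hleft : forall a b alpha beta : T,
      mul a alpha = mul a beta -> mul b alpha = mul b beta)
  (Hright : forall a b alpha beta : T,
      mul alpha a = mul beta a -> mul alpha b = mul beta b) :
  rectangular_band_of_groups mul.
Proof.
case: (pickP (fun _ : T => true)) => [x0 _|hT]; last first.
  exists (perm_of T), T, T, (fun x => (x, 1%g, x)); split.
    exists (fun t => t.1.1) => // -[[l h] i].
    by have := hT l.
  by move=> x; have := hT x.
have [e ee] := idem_exists mulA x0.
pose mul' := fun a b => mul b a.
have mulA' : associative mul' := fun a b c => esym (mulA c b a).
have Hs' : simple_semigroup mul'.
  move=> A [hne hcl]; apply: Hsimple; split => // x y hy.
  by case: (hcl x y hy) => h1 h2; split.
apply: (main_ne mulA Hleft Hright ee Hsimple).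
- exact: (Pw mulA' Hright Hleft ee Hs').
- move=> x y; exact: (R1 mulA' Hright Hleft ee y x).
- move=> x y; exact: (Rcancel mulA' Hright ee (x:=x) (y:=y)).
Qed.
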